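(* Let $k$ be a field of characteristic $0$ and $C$ a finite set. Consider the post-Lie-Rinehart algebra $(k,\mathrm{Lie}(\mathcal{T}_C),[-,-],\curvearrowright)$ (scalars $k$, zero anchor). Its algebra of elementary module endomorphisms $\mathrm{El}_k(\mathrm{Lie}(\mathcal{T}_C))$ equals the subalgebra of $(\mathrm{End}_k(\mathrm{Lie}(\mathcal{T}_C)),\circ)$ generated by $\hat{\mathcal{T}}^0_C$ (trees with a free edge at the root, acting as endomorphisms) together with $\delta(\mathrm{Lie}(\mathcal{T}_C))=\{\delta_x : x\in\mathrm{Lie}(\mathcal{T}_C)\}$, where $\delta_x(\eta)=[x,\eta]$.
   Context: Planar trees: $T_C$ is the set of planar rooted trees with vertices decorated by $C$; for $c\in C$ and an ordered (possibly empty) list $t_1,\dots,t_p\in T_C$, $B_c(t_1\cdots t_p)$ denotes the tree whose root is decorated by $c$ and whose ordered children subtrees are $t_1,\dots,t_p$; $\mathcal{T}_C=\mathrm{span}_k(T_C)$. Left grafting: $t_2\curvearrowright t_1=\sum_{v\in V(t_1)}t_2\curvearrowright_v t_1$, where $t_2\curvearrowright_v t_1$ attaches the root of $t_2$ to the vertex $v$ of $t_1$ as its new leftmost child. $\mathrm{Lie}(\mathcal{T}_C)$ is the free Lie algebra on the vector space $\mathcal{T}_C$, and $\curvearrowright$ is extended by $t_3\curvearrowright[t_2,t_1]=[t_3\curvearrowright t_2,t_1]+[t_2,t_3\curvearrowright t_1]$, $[t_3,t_2]\curvearrowright t_1=\mathrm{Ass}(t_3,t_2,t_1)-\mathrm{Ass}(t_2,t_3,t_1)$,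 $\mathrm{Ass}(a,b,c)=a\curvearrowright(b\curvearrowright c)-(a\curvearrowright b)\curvearrowright c$; this makes $\mathrm{Lie}(\mathcal{T}_C)$ a post-Lie algebra. Extend $\curvearrowright$ to a left action of the universal enveloping algebra $U$ of $(\mathrm{Lie}(\mathcal{T}_C),[-,-])$ (product $\cdot$) by $\mathbf 1\curvearrowright y=y$, $x\curvearrowright(w_1\cdot w_2)=(x\curvearrowright w_1)\cdot w_2+w_1\cdot(x\curvearrowright w_2)$, $(x\cdot w)\curvearrowright y=x\curvearrowright(w\curvearrowright y)-(x\curvearrowright w)\curvearrowright y$ for $x\in\mathrm{Lie}(\mathcal{T}_C)$, $w\in U$; then $B_c(t_1\cdots t_p)=(t_1\cdots t_p)\curvearrowright\bullet_c$. A tree with a free edge at the root is $B_c(t_1\cdots t_{j-1}\times t_j\cdots t_p)$, i.e. a tree with one additional empty input slot $\times$ at a specified position among the root's children; it acts as the endomorphism $x\mapsto (t_1\cdots t_{j-1}\cdot x\cdot t_j\cdots t_p)\curvearrowright\bullet_c$. $\hat{\mathcal{T}}^0_C$ is the span of these. For this post-Lie-Rinehart algebra (with scalars $k$ acting trivially), the connection is $\curvearrowright$, the torsion is $T(x,y)=-[x,y]$, $dX(Z)=Z\curvearrowright X$, $\delta X(Z)=T(Z,X)=[X,Z]$, $(\hat\nabla_X\nu)(Y)=X\curvearrowright\nu(Y)-\nu(X\curvearrowright Y)$, and $\mathrm{El}_k$ is the subalgebra of $\mathrm{End}_k$ generated by all $\hat\nabla_{X_1}\cdots\hat\nabla_{X_m}dY$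 and $\hat\nabla_{X_1}\cdots\hat\nabla_{X_m}\delta Y$, $m\ge0$. *)

(* Defs.v *)
From HB Require Import structures.
From mathcomp Require Import all_boot all_algebra.
From mathcomp Require Import freeg.
From Stdlib Require Import ClassicalEpsilon.

Set Implicit Arguments.
Unset Strict Implicit.
Unset Printing Implicit Defensive.

Import GRing.Theory.
Local Open Scope ring_scope.

(* Node c [:: t1; ...; tp] = B_c(t1 ... tp) (ordered children).         *)
Inductive tree (C : Type) := Node of C & seq (tree C).
Arguments Node {C}.

Section TreeCount.
Variable C : countType.

Fixpoint tree_enc (t : tree C) : GenTree.tree C :=
  let: Node c ts := t in GenTree.Node 0 (GenTree.Leaf c :: map tree_enc ts).

Fixpoint tree_dec (g : GenTree.tree C) : option (tree C) :=
  match g with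
  | GenTree.Node _ (GenTree.Leaf c :: gs) =>
      let fix decs (gs : seq (GenTree.tree C)) : option (seq (tree C)) :=
          match gs with
          | [::] => Some [::]
          | g1 :: gs' =>
              match tree_dec g1, decs gs' with
              | Some t, Some ts => Some (t :: ts)
              | _, _ => None
              end
          end in
      omap (Node c) (decs gs)
  | _ => None
  end.

Definition tree_rect' (P : tree C -> Type)
  (f : forall c ts, foldr (fun t acc => (P t * acc)%type) unit ts -> P (Node c ts)) :
  forall t, P t :=
  fix F t := match t with
    Node c ts => f c ts ((fix G ts :=
       match ts return foldr (fun t acc => (P t * acc)%type) unit ts with
       | [::] => tt
       | t1 :: ts' => (F t1, G ts')
       end) ts)
  end.

Lemma tree_encK : pcancel tree_enc tree_dec.
Proof.
elim/tree_rect' => c ts IH /=.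
suff -> : (fix decs (gs : seq (GenTree.tree C)) : option (seq (tree C)) :=
          match gs with
          | [::] => Some [::]
          | g1 :: gs' =>
              match tree_dec g1, decs gs' with
              | Some t, Some ts => Some (t :: ts)
              | _, _ => None
              end
          end) (map tree_enc ts) = Some ts by [].
elim: ts IH => [|t ts IHts] //= [-> /IHts ->] //.
Qed.

HB.instance Definition _ := Countable.copy (tree C) (pcan_type tree_encK).
End TreeCount.

(* Left grafting  t ↷ s = sum_v t ↷_v s, as the list of resulting trees *)
(* (with multiplicity): t is attached to vertex v as its new leftmost  *)
(* child.                                                              *)
Fixpoint graft (C : Type) (t s : tree C) : seq (tree C) :=
  let: Node c ts := s in
  Node c (t :: ts) ::
  (fix go (pre ts : seq (tree C)) : seq (tree C) :=
     match ts with
     | [::] => [::]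
     | s1 :: rest =>
         [seq Node c (rev pre ++ s' :: rest) | s' <- graft t s1] ++ go (s1 :: pre) rest
     end) [::] ts.

(* The tensor algebra T(T_C) = k<T_C>, free associative algebra over the *)
(* vector space spanned by trees: the free k-module on words of trees.  *)
(* It is the universal enveloping algebra U of Lie(T_C).                *)
Section Algebra.
Variables (k : fieldType) (C : finType).

Definition word := seq (tree C).
Definition TA := {freeg word / k}.

Definition bw (w : word) : TA := << w >>.
Definition treeA (t : tree C) : TA := bw [:: t].
Definition bullet (c : C) : tree C := Node c [::].

Definition lin (f : word -> TA) (a : TA) : TA :=
  \sum_(u <- dom a) coeff u a *: f u.

Definition mulA (a b : TA) : TA :=
  lin (fun u => lin (fun v => bw (u ++ v)) b) a.
Definition wordA (w : word) : TA := bw w.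
Definition bracketA (a b : TA) : TA := mulA a b - mulA b a.

Definition graftA (t s : tree C) : TA := \sum_(s' <- graft t s) treeA s'.

(* t ↷ w for a tree t and a word w: the derivation extending grafting *)
Fixpoint Dw (t : tree C) (w : word) : TA :=
  match w with
  | [::] => 0
  | t1 :: w' =>
      \sum_(s' <- graft t t1) bw (s' :: w')
      + lin (fun u => bw (t1 :: u)) (Dw t w')
  end.
Definition D (t : tree C) (a : TA) : TA := lin (Dw t) a.

(* action of a word of U on T(T_C):
   1 ↷ y = y,  (t · w) ↷ y = t ↷ (w ↷ y) - (t ↷ w) ↷ y. *)
Fixpoint actw (n : nat) (w : word) (y : TA) : TA :=
  match n, w with
  | _, [::] => y
  | 0, _ :: _ => 0
  | n'.+1, t :: w' => D t (actw n' w' y) - lin (fun u => actw n' u y) (Dw t w')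
  end.
Definition act (a y : TA) : TA := lin (fun w => actw (size w) w y) a.

(* Lie(T_C): the Lie subalgebra of T(T_C) generated by T_C
   (the free Lie algebra on the vector space T_C). *)
Inductive isLie : TA -> Prop :=
| isLie_tree t : isLie (treeA t)
| isLie0 : isLie 0
| isLieD a b : isLie a -> isLie b -> isLie (a + b)
| isLieZ (x : k) a : isLie a -> isLie (x *: a)
| isLieBr a b : isLie a -> isLie b -> isLie (bracketA a b).

Definition LieT := {a : TA | isLie a}.

Definition lzero : LieT := exist _ 0 isLie0.
Definition ladd (x y : LieT) : LieT := exist _ (sval x + sval y) (isLieD (proj2_sig x) (proj2_sig y)).
Definition lscale (c : k) (x : LieT) : LieT := exist _ (c *: sval x) (isLieZ c (proj2_sig x)).
Definition lsub (x y : LieT) : LieT := ladd x (lscale (-1) y).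
Definition lbr (x y : LieT) : LieT :=
  exist _ (bracketA (sval x) (sval y)) (isLieBr (proj2_sig x) (proj2_sig y)).

(* projection of T(T_C) onto Lie(T_C); it is only applied to elements
   that lie in Lie(T_C), where it is the identity. *)
Definition lproj (a : TA) : LieT :=
  match excluded_middle_informative (isLie a) with
  | left h => exist _ a h
  | right _ => lzero
  end.

Definition lact (x y : LieT) : LieT := lproj (act (sval x) (sval y)).

Definition Endo := LieT -> LieT.

Definition eadd (f g : Endo) : Endo := fun z => ladd (f z) (g z).
Definition escale (c : k) (f : Endo) : Endo := fun z => lscale c (f z).
Definition ecomp (f g : Endo) : Endo := fun z => f (g z).
Definition eid : Endo := fun z => z.

Definition dop (X : LieT) : Endo := fun Z => lact Z X.
Definition delta (X : LieT) : Endo := fun Z => lbr X Z.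
Definition nabla (X : LieT) (nu : Endo) : Endo :=
  fun Y => lsub (lact X (nu Y)) (nu (lact X Y)).
Definition nablas (Xs : seq LieT) (nu : Endo) : Endo := foldr nabla nu Xs.

Inductive subalg_gen (S : Endo -> Prop) : Endo -> Prop :=
| sag_base f : S f -> subalg_gen S f
| sag_id : subalg_gen S eid
| sag_add f g : subalg_gen S f -> subalg_gen S g -> subalg_gen S (eadd f g)
| sag_scale c f : subalg_gen S f -> subalg_gen S (escale c f)
| sag_comp f g : subalg_gen S f -> subalg_gen S g -> subalg_gen S (ecomp f g).

Inductive espan (S : Endo -> Prop) : Endo -> Prop :=
| esp_base f : S f -> espan S f
| esp_zero : espan S (fun _ => lzero)
| esp_add f g : espan S f -> espan S g -> espan S (eadd f g)
| esp_scale c f : espan S f -> espan S (escale c f).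

Definition El_generator (f : Endo) : Prop :=
  exists (Xs : seq LieT) (Y : LieT), f = nablas Xs (dop Y) \/ f = nablas Xs (delta Y).

Definition El : Endo -> Prop := subalg_gen El_generator.

(* tree with a free edge at the root B_c(t1 ... t_{j-1} × t_j ... t_p)
   (here ts = [:: t1; ...; tp], j0 = j - 1 trees before the slot),
   acting as x ↦ (t1 ⋯ t_{j-1} · x · t_j ⋯ t_p) ↷ •_c *)
Definition free_edge (c : C) (ts : seq (tree C)) (j0 : nat) : Endo :=
  fun x => lproj (act (mulA (mulA (wordA (take j0 ts)) (sval x)) (wordA (drop j0 ts)))
                      (treeA (bullet c))).

Definition hatT0 : Endo -> Prop :=
  espan (fun f => exists (c : C) (ts : seq (tree C)) (j0 : nat),
                    (j0 <= size ts)%N /\ f = free_edge c ts j0).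

Definition delta_set (f : Endo) : Prop := exists x : LieT, f = delta x.

End Algebra.

(* Main.v *)
From HB Require Import structures.
Require Import Defs.
From mathcomp Require Import all_boot all_algebra.
From mathcomp Require Import freeg zify.
From Stdlib Require Import ClassicalEpsilon FunctionalExtensionality ProofIrrelevance.
Set Implicit Arguments.
Unset Strict Implicit.
Unset Printing Implicit Defensive.
Import GRing.Theory.
Local Open Scope ring_scope.

Section Reflect.
Variable V : zmodType.
Inductive aexp := AAtom of nat | AAdd of aexp & aexp | AOpp of aexp | AZero.
Fixpoint aeval (env : seq V) e : V :=
  match e with
  | AAtom n => nth 0 env n
  | AAdd a b => aeval env a + aeval env b
  | AOpp a => - aeval env a
  | AZero => 0
  end.
Fixpoint addseq (s t : seq int) : seq int :=
  match s, t with
  | [::], t => t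
  | s, [::] => s
  | x :: s', y :: t' => (x + y) :: addseq s' t'
  end.
Fixpoint anorm e : seq int :=
  match e with
  | AAtom n => rcons (nseq n 0) 1
  | AAdd a b => addseq (anorm a) (anorm b)
  | AOpp a => map (fun x => - x) (anorm a)
  | AZero => [::]
  end.
Fixpoint ieval (env : seq V) (s : seq int) : V :=
  match s with
  | [::] => 0
  | x :: s' => (head 0 env) *~ x + ieval (behead env) s'
  end.
Lemma ieval_add env s t : ieval env (addseq s t) = ieval env s + ieval env t.
Proof.
elim: s t env => [|x s IH] [|y t] env /=; rewrite ?add0r ?addr0 //.
by rewrite IH mulrzDr addrACA.
Qed.
Lemma ieval_opp env s : ieval env (map (fun x => - x) s) = - ieval env s.
Proof.
elim: s env => [|x s IH] env /=; first by rewrite oppr0.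
by rewrite IH mulrNz opprD.
Qed.
Lemma ieval_atom env n : ieval env (rcons (nseq n 0) 1) = nth 0 env n.
Proof.
elim: n env => [|n IH] [|v env] /=; rewrite ?addr0 ?add0r ?mulr0z //.
- by rewrite IH; case: n {IH}.
Qed.
Lemma aeval_norm env e : aeval env e = ieval env (anorm e).
Proof.
elim: e => [n|a IHa b IHb|a IHa|] /=.
- by rewrite ieval_atom.
- by rewrite ieval_add IHa IHb.
- by rewrite ieval_opp IHa.
by [].
Qed.
Lemma ieval_zero env s : all (fun x => x == 0) s -> ieval env s = 0.
Proof.
elim: s env => [|x s IH] env //= /andP[/eqP -> H].
by rewrite mulr0z add0r IH.
Qed.
Lemma aeval_eq env e1 e2 :
  all (fun x => x == 0) (anorm (AAdd e1 (AOpp e2))) -> aeval env e1 = aeval env e2.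
Proof.
move=> H; apply/eqP; rewrite -subr_eq0.
have := aeval_norm env (AAdd e1 (AOpp e2)); rewrite /= => ->.
by rewrite ieval_zero.
Qed.
End Reflect.

Ltac mem_l x l :=
  lazymatch l with
  | x :: _ => constr:(true)
  | _ :: ?l' => mem_l x l'
  | _ => constr:(false)
  end.
Ltac add_atoms t acc :=
  lazymatch t with
  | @GRing.add _ ?a ?b => let acc1 := add_atoms a acc in add_atoms b acc1
  | @GRing.opp _ ?a => add_atoms a acc
  | @GRing.zero _ => acc
  | _ => let b := mem_l t acc in
         lazymatch b with true => acc | false => constr:(t :: acc) end
  end.
Ltac idx x l :=
  lazymatch l with
  | x :: _ => constr:(0%N)
  | _ :: ?l' => let n := idx x l' in constr:(n.+1)
  end.
Ltac reify t env :=
  lazymatch t with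
  | @GRing.add _ ?a ?b => let ea := reify a env in let eb := reify b env in constr:(AAdd ea eb)
  | @GRing.opp _ ?a => let ea := reify a env in constr:(AOpp ea)
  | @GRing.zero _ => constr:(AZero)
  | _ => let n := idx t env in constr:(AAtom n)
  end.
Ltac zmodid :=
  lazymatch goal with
  | |- @eq ?T ?L ?R =>
    let env0 := constr:(@nil T) in
    let env1 := add_atoms L env0 in
    let env := add_atoms R env1 in
        let eL := reify L env in
    let eR := reify R env in
    change (@aeval _ env eL = @aeval _ env eR);
    apply: aeval_eq; vm_compute; reflexivity
  end.


Section S.
Variables (k : fieldType) (C : finType).
Local Notation TA := (TA k C).
Local Notation word := (word C).
Local Notation bw := (@Defs.bw k C).
Local Notation treeA := (@Defs.treeA k C).
Local Notation Dw := (@Defs.Dw k C).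
Local Notation mulA := (@Defs.mulA k C).
Local Notation D := (@Defs.D k C).
Local Notation act := (@Defs.act k C).
Local Notation graftA := (@Defs.graftA k C).
Local Notation bracketA := (@Defs.bracketA k C).
Local Notation LieT := (@Defs.LieT k C).
Local Notation Endo := (@Defs.Endo k C).
Local Notation lact := (@Defs.lact k C).
Local Notation lproj := (@Defs.lproj k C).
Local Notation eadd := (@Defs.eadd k C).
Local Notation escale := (@Defs.escale k C).
Local Notation ecomp := (@Defs.ecomp k C).
Local Notation eid := (@Defs.eid k C).
Local Notation dop := (@Defs.dop k C).
Local Notation delta := (@Defs.delta k C).
Local Notation nabla := (@Defs.nabla k C).
Local Notation lin := (@lin k C).

Definition fgl (f : word -> TA) (a : TA) : TA := fglift f a.
HB.instance Definition _ f := GRing.isAdditive.Build TA TA (fgl f) (lift_is_additive f).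

Lemma scale_U (c : k) (u : word) : c *: bw u = << c *g u >>.
Proof.
apply/eqP/freeg_eqP => z; rewrite coeffZ /bw !coeffU mul1r //.
Qed.

Lemma ind_TA (P : TA -> Prop) : P 0 -> (forall c u a, P a -> P (c *: bw u + a)) -> forall a, P a.
Proof.
move=> H0 HS; apply: freeg_ind_dom0 => // c x D _ _ HD.
by rewrite -scale_U; apply: HS.
Qed.

Lemma linE f a : lin f a = fgl f a.
Proof.
rewrite /Defs.lin -[in RHS](freeg_sumE a) raddf_sum.
by apply: eq_bigr => u _; rewrite [RHS]liftU.
Qed.

Lemma lin_bw f u : lin f (bw u) = f u.
Proof. by rewrite linE /Defs.bw [LHS]liftU scale1r. Qed.

Lemma linZU f c u : lin f (c *: bw u) = c *: f u.
Proof. by rewrite linE scale_U [LHS]liftU. Qed.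

Lemma lin0 f : lin f 0 = 0.
Proof. by rewrite linE raddf0. Qed.

Lemma linD f a b : lin f (a + b) = lin f a + lin f b.
Proof. by rewrite !linE raddfD. Qed.

Lemma linN f a : lin f (- a) = - lin f a.
Proof. by rewrite !linE raddfN. Qed.

Lemma linB f a b : lin f (a - b) = lin f a - lin f b.
Proof. by rewrite !linE raddfB. Qed.

Lemma linZ f c a : lin f (c *: a) = c *: lin f a.
Proof.
elim/ind_TA: a => [|c' u a IH]; first by rewrite scaler0 lin0 scaler0.
by rewrite scalerDr linD IH scalerA linZU linD linZU scalerDr scalerA.
Qed.

Definition linmap (F : TA -> TA) := forall c a b, F (c *: a + b) = c *: F a + F b.

Lemma linmap0 F : linmap F -> F 0 = 0.
Proof.
move=> HF; have := HF (-1) 0 0; rewrite scaler0 add0r => H.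
by move: H; rewrite scaleN1r addNr.
Qed.

Lemma lin_unique F a : linmap F -> F a = lin (fun u => F (bw u)) a.
Proof.
move=> HF; elim/ind_TA: a => [|c u a IH]; first by rewrite lin0 linmap0.
by rewrite HF linD linZU IH.
Qed.

Lemma lin_linmap f : linmap (lin f).
Proof. by move=> c a b; rewrite linD linZ. Qed.

Lemma linmap_eq F G : linmap F -> linmap G -> (forall u, F (bw u) = G (bw u)) -> forall a, F a = G a.
Proof.
move=> HF HG E a; rewrite (lin_unique a HF) (lin_unique a HG).
by congr (lin _ a); apply: functional_extensionality => u.
Qed.

Lemma linF_add f g a : lin (fun u => f u + g u) a = lin f a + lin g a.
Proof.
apply: (@linmap_eq (lin (fun u => f u + g u)) (fun a => lin f a + lin g a)) => //.
  exact: lin_linmap.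
 by move=> c x y; rewrite !linD !linZ scalerDr addrACA.
by move=> u; rewrite !lin_bw.
Qed.

Lemma linF_scale f c a : lin (fun u => c *: f u) a = c *: lin f a.
Proof.
apply: (@linmap_eq (lin (fun u => c *: f u)) (fun a => c *: lin f a)) => //.
  exact: lin_linmap.
 by move=> c' x y; rewrite !linD !linZ scalerDr !scalerA mulrC.
by move=> u; rewrite !lin_bw.
Qed.

Lemma linF0 a : lin (fun _ => 0) a = 0.
Proof.
by have := linF_scale (fun _ => 0) 0 a; rewrite !scale0r.
Qed.

Lemma linF_ext f g a : (forall u, f u = g u) -> lin f a = lin g a.
Proof. by move=> E; congr (lin _ a); apply: functional_extensionality. Qed.

Lemma lin_comp f g a : lin f (lin g a) = lin (fun u => lin f (g u)) a.
Proof.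
apply: (@linmap_eq (fun a => lin f (lin g a)) (lin (fun u => lin f (g u)))) => //.
  by move=> c x y; rewrite !linD !linZ.
 exact: lin_linmap.
by move=> u; rewrite !lin_bw.
Qed.

Lemma lin_id a : lin bw a = a.
Proof.
by apply: (@linmap_eq (lin bw) id) => //; [exact: lin_linmap | move=> u; rewrite lin_bw].
Qed.

Lemma mulA_bw u v : mulA (bw u) (bw v) = bw (u ++ v).
Proof. by rewrite /Defs.mulA !lin_bw. Qed.

Lemma mulAl b : linmap (fun a => mulA a b).
Proof. by move=> c x y; rewrite /Defs.mulA linD linZ. Qed.

Lemma mulAr a : linmap (mulA a).
Proof.
move=> c x y; rewrite /Defs.mulA -linF_scale -linF_add.
by apply: linF_ext => u; rewrite linD linZ.
Qed.

Lemma linmapD F : linmap F -> forall a b, F (a + b) = F a + F b.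
Proof. by move=> HF a b; have := HF 1 a b; rewrite !scale1r. Qed.
Lemma linmapZ F : linmap F -> forall c a, F (c *: a) = c *: F a.
Proof. by move=> HF c a; have := HF c a 0; rewrite !addr0 linmap0 // addr0. Qed.
Lemma linmapN F : linmap F -> forall a, F (- a) = - F a.
Proof. by move=> HF a; rewrite -scaleN1r linmapZ // scaleN1r. Qed.
Lemma linmapB F : linmap F -> forall a b, F (a - b) = F a - F b.
Proof. by move=> HF a b; rewrite linmapD // linmapN. Qed.

Lemma mulADl a b c : mulA (a + b) c = mulA a c + mulA b c.
Proof. exact: (linmapD (mulAl c)). Qed.
Lemma mulADr a b c : mulA a (b + c) = mulA a b + mulA a c.
Proof. exact: (linmapD (mulAr a)). Qed.
Lemma mulABl a b c : mulA (a - b) c = mulA a c - mulA b c.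
Proof. exact: (linmapB (mulAl c)). Qed.
Lemma mulABr a b c : mulA a (b - c) = mulA a b - mulA a c.
Proof. exact: (linmapB (mulAr a)). Qed.
Lemma mulANl a c : mulA (- a) c = - mulA a c.
Proof. exact: (linmapN (mulAl c)). Qed.
Lemma mulANr a c : mulA a (- c) = - mulA a c.
Proof. exact: (linmapN (mulAr a)). Qed.
Lemma mulAZl x a c : mulA (x *: a) c = x *: mulA a c.
Proof. exact: (linmapZ (mulAl c)). Qed.
Lemma mulAZr x a c : mulA a (x *: c) = x *: mulA a c.
Proof. exact: (linmapZ (mulAr a)). Qed.
Lemma mulA0l c : mulA 0 c = 0.
Proof. exact: (linmap0 (mulAl c)). Qed.
Lemma mulA0r c : mulA c 0 = 0.
Proof. exact: (linmap0 (mulAr c)). Qed.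

Lemma linmap_comp F G : linmap F -> linmap G -> linmap (fun a => F (G a)).
Proof. by move=> HF HG c a b; rewrite HG HF. Qed.

Lemma mulA_assoc a b c : mulA (mulA a b) c = mulA a (mulA b c).
Proof.
move: a; apply: (@linmap_eq (fun a => mulA (mulA a b) c) (fun a => mulA a (mulA b c))).
- exact: (linmap_comp (mulAl c) (mulAl b)).
- exact: mulAl.
move=> u; move: b; apply: (@linmap_eq (fun b => mulA (mulA (bw u) b) c) (fun b => mulA (bw u) (mulA b c))).
- exact: (linmap_comp (mulAl c) (mulAr (bw u))).
- exact: (linmap_comp (mulAr (bw u)) (mulAl c)).
move=> v; move: c; apply: (@linmap_eq (fun c => mulA (mulA (bw u) (bw v)) c) (fun c => mulA (bw u) (mulA (bw v) c))).
- exact: mulAr.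
- exact: (linmap_comp (mulAr (bw u)) (mulAr (bw v))).
by move=> w; rewrite !mulA_bw catA.
Qed.

Lemma mulA1l a : mulA (bw [::]) a = a.
Proof.
move: a; apply: (@linmap_eq (mulA (bw [::])) id) => //; first exact: mulAr.
by move=> u; rewrite mulA_bw.
Qed.

Lemma mulA1r a : mulA a (bw [::]) = a.
Proof.
move: a; apply: (@linmap_eq (fun a => mulA a (bw [::])) id) => //; first exact: mulAl.
by move=> u; rewrite mulA_bw cats0.
Qed.

Lemma mulA_suml I (r : seq I) (F : I -> TA) c :
  mulA (\sum_(i <- r) F i) c = \sum_(i <- r) mulA (F i) c.
Proof.
elim: r => [|i r IH]; first by rewrite !big_nil mulA0l.
by rewrite !big_cons mulADl IH.
Qed.

Lemma lin_sum I (r : seq I) (F : I -> TA) f :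
  lin f (\sum_(i <- r) F i) = \sum_(i <- r) lin f (F i).
Proof.
elim: r => [|i r IH]; first by rewrite !big_nil lin0.
by rewrite !big_cons linD IH.
Qed.

Lemma lin_cons t a : lin (fun u => bw (t :: u)) a = mulA (treeA t) a.
Proof.
move: a; apply: (@linmap_eq (lin (fun u => bw (t :: u))) (mulA (treeA t))).
- exact: lin_linmap.
- exact: mulAr.
by move=> u; rewrite lin_bw /Defs.treeA mulA_bw.
Qed.

Lemma Dw_cons t t1 w :
  Dw t (t1 :: w) = mulA (graftA t t1) (bw w) + mulA (treeA t1) (Dw t w).
Proof.
rewrite /= lin_cons /Defs.graftA mulA_suml; congr (_ + _).
by apply: eq_bigr => s' _; rewrite /Defs.treeA mulA_bw.
Qed.

Lemma D_bw t w : D t (bw w) = Dw t w.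
Proof. exact: lin_bw. Qed.

Lemma D_linmap t : linmap (D t).
Proof. exact: lin_linmap. Qed.

Lemma Dw_cat t u v : Dw t (u ++ v) = mulA (Dw t u) (bw v) + mulA (bw u) (Dw t v).
Proof.
elim: u => [|t1 u IH].
  by rewrite /= mulA0l add0r mulA1l.
rewrite cat_cons !Dw_cons IH.
rewrite mulADl !mulADr -!mulA_assoc [mulA (mulA (graftA t t1) _) _]mulA_assoc mulA_bw -addrA.
by rewrite /Defs.treeA mulA_bw.
Qed.

Lemma D_der t a b : D t (mulA a b) = mulA (D t a) b + mulA a (D t b).
Proof.
move: a; apply: (@linmap_eq (fun a => D t (mulA a b)) (fun a => mulA (D t a) b + mulA a (D t b))).
- exact: (linmap_comp (D_linmap t) (mulAl b)).
- by move=> c x y; rewrite (D_linmap t) mulAl mulAl scalerDr addrACA.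
move=> u; move: b; apply: (@linmap_eq (fun b => D t (mulA (bw u) b)) (fun b => mulA (D t (bw u)) b + mulA (bw u) (D t b))).
- exact: (linmap_comp (D_linmap t) (mulAr (bw u))).
- by move=> c x y; rewrite (D_linmap t) !mulAr scalerDr addrACA.
by move=> v; rewrite mulA_bw !D_bw Dw_cat.
Qed.

Definition SizeP n (a : TA) :=
  forall f g, (forall u, size u = n -> f u = g u) -> lin f a = lin g a.

Lemma Dw_size t w : SizeP (size w) (Dw t w).
Proof.
elim: w => [|t1 w IH] f g E /=; first by rewrite !lin0.
rewrite !linD (lin_sum (graft t t1) _ f) (lin_sum (graft t t1) _ g) !lin_comp; congr (_ + _).
  by apply: eq_bigr => s' _; rewrite !lin_bw E.
apply: (IH (fun u => lin f (bw (t1 :: u))) (fun u => lin g (bw (t1 :: u)))) => u Hu.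
by rewrite !lin_bw E //= Hu.
Qed.

Lemma act_bw w y : act (bw w) y = actw (size w) w y.
Proof. exact: lin_bw. Qed.

Lemma act_nil y : act (bw [::]) y = y.
Proof. by rewrite act_bw. Qed.

Lemma act_cons t w y : act (bw (t :: w)) y = D t (act (bw w) y) - act (Dw t w) y.
Proof.
rewrite !act_bw /=; congr (_ - _).
by apply: Dw_size => u ->.
Qed.

Lemma actl_linmap y : linmap (fun a => act a y).
Proof. by move=> c a b; rewrite /Defs.act linD linZ. Qed.

Lemma actw_linmap n w : linmap (actw n w).
Proof.
elim: n w => [|n IH] [|t w] //= c a b.
  by rewrite scaler0 addr0.
rewrite (IH w) (D_linmap t).
rewrite (linF_ext (f := (actw n)^~ (c *: a + b)) (g := fun u => c *: actw n u a + actw n u b)); last first.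
  by move=> u; rewrite IH.
rewrite linF_add linF_scale scalerBr.
by rewrite addrACA opprD.
Qed.

Lemma act_linmap a : linmap (act a).
Proof.
move=> c x y; rewrite /Defs.act -linF_scale -linF_add.
by apply: linF_ext => u; rewrite actw_linmap.
Qed.

Lemma act_tree t y : act (treeA t) y = D t y.
Proof. by rewrite /Defs.treeA act_cons act_nil /= /Defs.act lin0 subr0. Qed.


Lemma linmap_sub F G : linmap F -> linmap G -> linmap (fun x => F x - G x).
Proof. by move=> HF HG c a b; rewrite HF HG scalerBr addrACA opprD. Qed.
Lemma linmap_add F G : linmap F -> linmap G -> linmap (fun x => F x + G x).
Proof. by move=> HF HG c a b; rewrite HF HG scalerDr addrACA. Qed.

Definition Der (X : TA) := forall a b, act X (mulA a b) = mulA (act X a) b + mulA a (act X b).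
Definition Mod (X : TA) := forall w y, act (mulA X w) y = act X (act w y) - act (act X w) y.

Lemma Der_tree t : Der (treeA t).
Proof. by move=> a b; rewrite !act_tree D_der. Qed.

Lemma Mod_tree t : Mod (treeA t).
Proof.
move=> w y; move: w.
apply: (@linmap_eq (fun w => act (mulA (treeA t) w) y) (fun w => act (treeA t) (act w y) - act (act (treeA t) w) y)).
- exact: (linmap_comp (actl_linmap y) (mulAr _)).
- apply: linmap_sub.
    exact: (linmap_comp (act_linmap _) (actl_linmap y)).
  exact: (linmap_comp (actl_linmap y) (act_linmap _)).
by move=> w; rewrite /Defs.treeA mulA_bw /= act_cons !act_tree D_bw.
Qed.

Inductive LieH : nat -> TA -> Prop :=
| LH_tree t : LieH 1 (treeA t)
| LH0 n : LieH n 0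
| LHD n a b : LieH n a -> LieH n b -> LieH n (a + b)
| LHZ n (c : k) a : LieH n a -> LieH n (c *: a)
| LHBr p q a b : LieH p a -> LieH q b -> LieH (p + q) (bracketA a b).

Lemma LHN n a : LieH n a -> LieH n (- a).
Proof. by move=> H; rewrite -scaleN1r; apply: LHZ. Qed.
Lemma LHB n a b : LieH n a -> LieH n b -> LieH n (a - b).
Proof. by move=> Ha Hb; apply: LHD => //; apply: LHN. Qed.

Lemma LieH0 n a : LieH n a -> n = 0%N -> a = 0.
Proof.
elim=> //=.
- by move=> n0 a0 b0 _ IHa _ IHb E; rewrite IHa // IHb // addr0.
- by move=> n0 c a0 _ IH E; rewrite IH // scaler0.
move=> p q a0 b0 _ IHa _ IHb /eqP; rewrite addn_eq0 => /andP[/eqP p0 _].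
by rewrite /Defs.bracketA IHa // mulA0l mulA0r subrr.
Qed.

Definition Pres (X : TA) := forall p Y, LieH p Y -> LieH p (act X Y).
Definition PP X := [/\ Der X, Mod X & Pres X].

Lemma act0l y : act 0 y = 0.
Proof. exact: lin0. Qed.

Lemma actDl a b y : act (a + b) y = act a y + act b y.
Proof. exact: linD. Qed.
Lemma actZl c a y : act (c *: a) y = c *: act a y.
Proof. exact: linZ. Qed.
Lemma actBl a b y : act (a - b) y = act a y - act b y.
Proof. exact: linB. Qed.
Lemma actNl a y : act (- a) y = - act a y.
Proof. exact: linN. Qed.
Lemma actDr a x y : act a (x + y) = act a x + act a y.
Proof. exact: (linmapD (act_linmap a)). Qed.
Lemma actBr a x y : act a (x - y) = act a x - act a y.
Proof. exact: (linmapB (act_linmap a)). Qed.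
Lemma actZr a c y : act a (c *: y) = c *: act a y.
Proof. exact: (linmapZ (act_linmap a)). Qed.
Lemma act0r a : act a 0 = 0.
Proof. exact: (linmap0 (act_linmap a)). Qed.

Lemma PP0 : PP 0.
Proof.
split.
- by move=> a b; rewrite !act0l mulA0l mulA0r addr0.
- by move=> w y; rewrite mulA0l !act0l subr0.
by move=> p Y _; rewrite act0l; apply: LH0.
Qed.

Lemma PP_lin c X Z : PP X -> PP Z -> PP (c *: X + Z).
Proof.
case=> DX MX PX [DZ MZ PZ]; split.
- move=> a b; rewrite !actDl !actZl DX DZ mulADl mulADr mulAZl mulAZr scalerDr.
  by rewrite addrACA.
- move=> w y; rewrite mulADl mulAZl !actDl !actZl MX MZ.
  by rewrite scalerBr addrACA opprD.
by move=> p Y HY; rewrite actDl actZl; apply: LHD; [apply: LHZ; apply: PX|apply: PZ].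
Qed.

Lemma PP_add X Z : PP X -> PP Z -> PP (X + Z).
Proof. by move=> HX HZ; rewrite -[X]scale1r; apply: PP_lin. Qed.
Lemma PP_scale c X : PP X -> PP (c *: X).
Proof. by move=> HX; rewrite -[c *: X]addr0; apply: PP_lin => //; apply: PP0. Qed.
Lemma PP_sub X Z : PP X -> PP Z -> PP (X - Z).
Proof. by move=> HX HZ; rewrite addrC -scaleN1r; apply: PP_lin. Qed.

Lemma graftA_LieH t s : LieH 1 (graftA t s).
Proof.
rewrite /Defs.graftA; elim: (graft t s) => [|s' r IH]; first by rewrite big_nil; apply: LH0.
by rewrite big_cons; apply: LHD => //; apply: LH_tree.
Qed.

Lemma D_bracket t a b : D t (bracketA a b) = bracketA (D t a) b + bracketA a (D t b).
Proof.
rewrite /Defs.bracketA (linmapB (D_linmap t)) !D_der.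
by rewrite opprD [- _ - _]addrC addrACA.
Qed.

Lemma Pres_tree t : Pres (treeA t).
Proof.
move=> p Y; elim=> {p Y}.
- move=> s; rewrite act_tree /Defs.treeA D_bw Dw_cons /= mulA1r mulA0r addr0.
  exact: graftA_LieH.
- by move=> n; rewrite act0r; apply: LH0.
- by move=> n a b _ Ha _ Hb; rewrite actDr; apply: LHD.
- by move=> n c a _ Ha; rewrite actZr; apply: LHZ.
move=> p q a b Ha' Ha Hb' Hb; rewrite !act_tree D_bracket.
rewrite !act_tree in Ha Hb.
by apply: LHD; apply: LHBr.
Qed.

Lemma PP_tree t : PP (treeA t).
Proof. split; [exact: Der_tree | exact: Mod_tree | exact: Pres_tree]. Qed.


Lemma zm_test (a b : TA) : a + b - a = b.
Proof. zmodid. Qed.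

Definition DerF (F : TA -> TA) := forall u v, F (mulA u v) = mulA (F u) v + mulA u (F v).

Lemma DerF_comm F G H : linmap F -> linmap G -> DerF F -> DerF G -> DerF H ->
  DerF (fun x => F (G x) - G (F x) - H x).
Proof.
move=> LF LG DF DG DH u v.
rewrite DG DF (linmapD LF) (linmapD LG) !DF !DG DH !mulABl !mulABr.
zmodid.
Qed.

Lemma act_bracket a b y : Mod a -> Mod b ->
  act (bracketA a b) y = act a (act b y) - act b (act a y) - act (act a b - act b a) y.
Proof.
move=> Ma Mb; rewrite /Defs.bracketA actBl Ma Mb actBl; zmodid.
Qed.


Lemma PP_bracket a b : PP a -> PP b -> PP (act a b) -> PP (act b a) -> PP (bracketA a b).
Proof.
move=> Pa Pb Pab Pba.
have PE : PP (act a b - act b a) by apply: PP_sub.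
case: (Pa) => Da Ma Ra; case: (Pb) => Db Mb Rb; case: (PE) => DE ME RE.
case: Pab => _ Mab _; case: Pba => _ Mba _.
have AB := fun y => act_bracket y Ma Mb.
split.
- move=> u v; rewrite !AB.
  exact: (DerF_comm (act_linmap a) (act_linmap b) Da Db DE u v).
- move=> w y; rewrite !AB.
  rewrite /Defs.bracketA mulABl !mulA_assoc. rewrite (actBl (mulA a (mulA b w))). 
  rewrite (Ma (mulA b w) y) (Mb (mulA a w) y) (Da b w) (Db a w) !actDl.
  rewrite (Mab w y) (Mba w y) (Mb (act a w) y) (Ma (act b w) y) (Mb w y) (Ma w y).
  rewrite !actBr ?actBl !actNl !actDl !actNl.
  zmodid.
move=> p Y HY; rewrite AB; apply: LHB; [apply: LHB|].
- by apply: Ra; apply: Rb.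
- by apply: Rb; apply: Ra.
by apply: RE.
Qed.


Lemma bracket0l b : bracketA 0 b = 0.
Proof. by rewrite /Defs.bracketA mulA0l mulA0r subrr. Qed.
Lemma bracket0r a : bracketA a 0 = 0.
Proof. by rewrite /Defs.bracketA mulA0l mulA0r subrr. Qed.

Lemma LieH_PP n : forall m X, (m <= n)%N -> LieH m X -> PP X.
Proof.
elim: n => [|n IHn] m X Hm HX.
  by move: Hm; rewrite leqn0 => /eqP m0; rewrite (LieH0 HX m0); apply: PP0.
elim: HX Hm => {m X}.
- by move=> t _; apply: PP_tree.
- by move=> *; apply: PP0.
- by move=> m a b _ IHa _ IHb Hm; apply: PP_add; [apply: IHa|apply: IHb].
- by move=> m c a _ IHa Hm; apply: PP_scale; apply: IHa.
move=> p q a b Ha IHa Hb IHb Hpq.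
have Pa : PP a by apply: IHa; apply: leq_trans Hpq; apply: leq_addr.
have Pb : PP b by apply: IHb; apply: leq_trans Hpq; apply: leq_addl.
case: (posnP p) => [p0|pp]; first by rewrite (LieH0 Ha p0) bracket0l; apply: PP0.
case: (posnP q) => [q0|qp]; first by rewrite (LieH0 Hb q0) bracket0r; apply: PP0.
apply: PP_bracket => //.
- apply: (IHn q); last by case: Pa => _ _ Ra; apply: Ra.
  by move: Hpq pp; clear; lia.
- apply: (IHn p); last by case: Pb => _ _ Rb; apply: Rb.
  by move: Hpq qp; clear; lia.
Qed.

Inductive LieS : TA -> Prop :=
| LS_H n a : LieH n a -> LieS a
| LS_D a b : LieS a -> LieS b -> LieS (a + b).

Lemma LieS_scale c a : LieS a -> LieS (c *: a).
Proof.
elim=> [n x Hx|x y _ IHx _ IHy]; first by apply: (LS_H (LHZ c Hx)).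
by rewrite scalerDr; apply: LS_D.
Qed.

Lemma bracketDl a1 a2 b : bracketA (a1 + a2) b = bracketA a1 b + bracketA a2 b.
Proof. by rewrite /Defs.bracketA mulADl mulADr; zmodid. Qed.
Lemma bracketDr a b1 b2 : bracketA a (b1 + b2) = bracketA a b1 + bracketA a b2.
Proof. by rewrite /Defs.bracketA mulADl mulADr; zmodid. Qed.

Lemma LieS_br a b : LieS a -> LieS b -> LieS (bracketA a b).
Proof.
move=> Ha Hb; elim: Ha => [n x Hx|x1 x2 _ IH1 _ IH2]; last by rewrite bracketDl; apply: LS_D.
elim: Hb => [m y Hy|y1 y2 _ IH1 _ IH2]; last by rewrite bracketDr; apply: LS_D.
exact: (LS_H (LHBr Hx Hy)).
Qed.

Lemma isLie_LieS X : isLie X -> LieS X.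
Proof.
elim=> {X}.
- by move=> t; apply: (LS_H (LH_tree t)).
- exact: (LS_H (LH0 0)).
- by move=> a b _ Ha _ Hb; apply: LS_D.
- by move=> c a _ Ha; apply: LieS_scale.
by move=> a b _ Ha _ Hb; apply: LieS_br.
Qed.

Lemma LieH_isLie n X : LieH n X -> isLie X.
Proof. by elim=> *; constructor. Qed.

Lemma LieS_isLie X : LieS X -> isLie X.
Proof. by elim=> [n a /LieH_isLie|a b _ Ha _ Hb] //; constructor. Qed.

Lemma isLie_PP X : isLie X -> PP X.
Proof.
move/isLie_LieS; elim=> [n a Ha|a b _ Ha _ Hb]; last exact: PP_add.
exact: (LieH_PP (leqnn n) Ha).
Qed.

Lemma act_isLie X Y : isLie X -> isLie Y -> isLie (act X Y).
Proof.
move=> /isLie_PP [_ _ RX] /isLie_LieS; elim=> [n a Ha|a b _ Ha _ Hb].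
  exact: (LieH_isLie (RX _ _ Ha)).
by rewrite actDr; constructor.
Qed.

Lemma isLie_Der X : isLie X -> Der X.
Proof. by case/isLie_PP. Qed.
Lemma isLie_Mod X : isLie X -> Mod X.
Proof. by case/isLie_PP. Qed.


Lemma lieT_eq (x y : LieT) : sval x = sval y -> x = y.
Proof.
case: x => [a ha]; case: y => [b hb] /= E; subst b.
by rewrite (proof_irrelevance _ ha hb).
Qed.

Lemma endo_ext (f g : Endo) : (forall z, sval (f z) = sval (g z)) -> f = g.
Proof. by move=> E; apply: functional_extensionality => z; apply: lieT_eq. Qed.

Lemma lproj_val a : isLie a -> sval (lproj a) = a.
Proof.
by move=> h; rewrite /Defs.lproj; case: excluded_middle_informative.
Qed.

Lemma lact_val X Y : sval (lact X Y) = act (sval X) (sval Y).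
Proof. by rewrite /Defs.lact lproj_val //; apply: act_isLie; apply: proj2_sig. Qed.

Lemma lzero_val : sval (@Defs.lzero k C) = 0. Proof. by []. Qed.
Lemma ladd_val x y : sval (@Defs.ladd k C x y) = sval x + sval y. Proof. by []. Qed.
Lemma lscale_val c x : sval (@Defs.lscale k C c x) = c *: sval x. Proof. by []. Qed.
Lemma lsub_val x y : sval (@Defs.lsub k C x y) = sval x - sval y.
Proof. by rewrite /Defs.lsub ladd_val lscale_val scaleN1r. Qed.
Lemma lbr_val x y : sval (@Defs.lbr k C x y) = bracketA (sval x) (sval y). Proof. by []. Qed.

Definition zeroE : Endo := fun _ => @Defs.lzero k C.


Lemma lin_closed (P : TA -> Prop) : P 0 -> (forall x y, P x -> P y -> P (x + y)) ->
  (forall c x, P x -> P (c *: x)) -> forall f a, (forall u, P (f u)) -> P (lin f a).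
Proof.
move=> P0 PD PZ f a Hf; rewrite /Defs.lin.
by apply: big_ind => // u _; apply: PZ.
Qed.

Lemma act_as_lin a y : act a y = lin (fun u => act (bw u) y) a.
Proof. by apply: linF_ext => u; rewrite act_bw. Qed.

Lemma act_SizeP n a y (f : word -> TA) : SizeP n a ->
  (forall u, size u = n -> act (bw u) y = f u) -> act a y = lin f a.
Proof. by move=> Ha E; rewrite act_as_lin; apply: Ha. Qed.

Lemma act_bw_LieH1 n : forall w, size w = n -> forall y, LieH 1 y -> LieH 1 (act (bw w) y).
Proof.
elim: n => [|n IH] [|t w] //= Hs y Hy; first by rewrite act_nil.
case: Hs => Hs; rewrite act_cons; apply: LHB.
  by rewrite -act_tree; apply: Pres_tree; apply: IH.
rewrite (@act_SizeP (size w) _ y (fun u => if size u == n then act (bw u) y else 0)).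
- apply: lin_closed => //; [exact: LH0 | exact: LHD | exact: LHZ |].
  by move=> u; case: eqP => [Hu|_]; [apply: IH | apply: LH0].
- exact: Dw_size.
by move=> u Hu; rewrite Hu Hs eqxx.
Qed.

Lemma act_LieH1 a y : LieH 1 y -> LieH 1 (act a y).
Proof.
move=> Hy; rewrite act_as_lin; apply: lin_closed => //; [exact: LH0 | exact: LHD | exact: LHZ |].
by move=> u; apply: (act_bw_LieH1 (erefl (size u))).
Qed.

Section Go.
Variables (c : C) (t : tree C).
Fixpoint go (pre ts : seq (tree C)) : seq (tree C) :=
  match ts with
  | [::] => [::]
  | s1 :: rest =>
      [seq Node c (rev pre ++ s' :: rest) | s' <- graft t s1] ++ go (s1 :: pre) rest
  end.
End Go.

Lemma graft_node t c ts : graft t (Node c ts) = Node c (t :: ts) :: go c t [::] ts.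
Proof. by []. Qed.

Lemma go_sum c t pre ts :
  \sum_(s' <- go c t pre ts) treeA s' = lin (fun u => treeA (Node c (rev pre ++ u))) (Dw t ts).
Proof.
elim: ts pre => [|s1 rest IH] pre /=; first by rewrite big_nil lin0.
rewrite big_cat IH big_map linD lin_sum lin_comp; congr (_ + _).
  by apply: eq_bigr => s' _; rewrite lin_bw.
apply: linF_ext => u; rewrite lin_bw rev_cons cat_rcons //.
Qed.

Lemma D_treeA t s : D t (treeA s) = graftA t s.
Proof. by rewrite /Defs.treeA D_bw Dw_cons /= mulA1r mulA0r addr0. Qed.

Lemma tree_act_n c n : forall ts, size ts = n ->
  act (bw ts) (treeA (bullet c)) = treeA (Node c ts).
Proof.
elim: n => [|n IH] [|t ts] //= Hs; first by rewrite act_nil.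
case: Hs => Hs; rewrite act_cons (IH _ Hs) D_treeA /Defs.graftA graft_node big_cons go_sum.
rewrite (@act_SizeP (size ts) _ _ (fun u => treeA (Node c u))); first by rewrite addrK.
- exact: Dw_size.
by move=> u Hu; rewrite IH // Hu.
Qed.

Lemma tree_act c ts : treeA (Node c ts) = act (bw ts) (treeA (bullet c)).
Proof. by rewrite (tree_act_n c (erefl (size ts))). Qed.


Lemma eadd_val f g z : sval (eadd f g z) = sval (f z) + sval (g z). Proof. by []. Qed.
Lemma escale_val c f z : sval (escale c f z) = c *: sval (f z). Proof. by []. Qed.
Lemma ecomp_val f g z : sval (ecomp f g z) = sval (f (g z)). Proof. by []. Qed.
Lemma eid_val z : sval (eid z) = sval z. Proof. by []. Qed.
Lemma zeroE_val z : sval (zeroE z) = 0. Proof. by []. Qed.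
Lemma dop_val Y Z : sval (dop Y Z) = act (sval Z) (sval Y).
Proof. exact: lact_val. Qed.
Lemma delta_val Y Z : sval (delta Y Z) = bracketA (sval Y) (sval Z). Proof. by []. Qed.
Lemma nabla_val X nu Y :
  sval (nabla X nu Y) = act (sval X) (sval (nu Y)) - sval (nu (lact X Y)).
Proof. by rewrite /Defs.nabla lsub_val lact_val. Qed.

Definition Lin (f : Endo) := forall c x y,
  sval (f (@Defs.ladd k C (@Defs.lscale k C c x) y)) = c *: sval (f x) + sval (f y).

Lemma Lin_sub f : Lin f -> forall x y, sval (f (@Defs.lsub k C x y)) = sval (f x) - sval (f y).
Proof.
move=> Hf x y.
have -> : @Defs.lsub k C x y = @Defs.ladd k C (@Defs.lscale k C (-1) y) x.
  by apply: lieT_eq; rewrite lsub_val ladd_val lscale_val scaleN1r addrC.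
by rewrite Hf scaleN1r addrC.
Qed.

Lemma zeroE_escale : zeroE = escale 0 eid.
Proof. by apply: endo_ext => z; rewrite escale_val scale0r. Qed.

Definition FE (c : C) (u v : TA) : Endo :=
  fun x => lproj (act (mulA (mulA u (sval x)) v) (treeA (bullet c))).

Lemma act_bullet_Lie c a : isLie (act a (treeA (bullet c))).
Proof. exact: (LieH_isLie (act_LieH1 a (LH_tree _))). Qed.

Lemma FE_val c u v x : sval (FE c u v x) = act (mulA (mulA u (sval x)) v) (treeA (bullet c)).
Proof. by rewrite /FE lproj_val //; apply: act_bullet_Lie. Qed.

Lemma free_edgeE c ts j0 : free_edge c ts j0 = FE c (bw (take j0 ts)) (bw (drop j0 ts)).
Proof. by []. Qed.

Lemma FE_hatT0 c u v : hatT0 (FE c u v).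
Proof.
elim/ind_TA: u => [|c1 w u IH].
  have -> : FE c 0 v = fun _ => @Defs.lzero k C.
    by apply: endo_ext => z; rewrite FE_val !mulA0l act0l.
  exact: esp_zero.
have -> : FE c (c1 *: bw w + u) v = eadd (escale c1 (FE c (bw w) v)) (FE c u v).
  by apply: endo_ext => z; rewrite eadd_val escale_val !FE_val !mulADl !mulAZl actDl actZl.
apply: esp_add => //; apply: esp_scale.
elim/ind_TA: v {IH} => [|c2 w' v IH].
  have -> : FE c (bw w) 0 = fun _ => @Defs.lzero k C.
    by apply: endo_ext => z; rewrite FE_val !mulA0r act0l.
  exact: esp_zero.
have -> : FE c (bw w) (c2 *: bw w' + v) = eadd (escale c2 (FE c (bw w) (bw w'))) (FE c (bw w) v).
  by apply: endo_ext => z; rewrite eadd_val escale_val !FE_val !mulADr !mulAZr actDl actZl.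
apply: esp_add => //; apply: esp_scale; apply: esp_base.
exists c, (w ++ w'), (size w); split; first by rewrite size_cat leq_addr.
by rewrite free_edgeE take_size_cat // drop_size_cat.
Qed.

Lemma bracketZr a c b : bracketA a (c *: b) = c *: bracketA a b.
Proof. by rewrite /Defs.bracketA mulAZl mulAZr scalerBr. Qed.

Lemma Lin_FE c u v : Lin (FE c u v).
Proof.
by move=> c1 x y; rewrite !FE_val ladd_val lscale_val mulADr mulAZr mulADl mulAZl actDl actZl.
Qed.

Lemma Lin_delta Y : Lin (delta Y).
Proof. by move=> c1 x y; rewrite !delta_val ladd_val lscale_val bracketDr bracketZr. Qed.

Lemma Lin_eid : Lin eid. Proof. by []. Qed.
Lemma Lin_zeroE : Lin zeroE. Proof. by move=> *; rewrite !zeroE_val scaler0 addr0. Qed.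

Lemma Lin_eadd f g : Lin f -> Lin g -> Lin (eadd f g).
Proof. by move=> Hf Hg c x y; rewrite !eadd_val Hf Hg scalerDr addrACA. Qed.
Lemma Lin_escale c f : Lin f -> Lin (escale c f).
Proof. by move=> Hf c1 x y; rewrite !escale_val Hf scalerDr !scalerA mulrC. Qed.
Lemma Lin_ecomp f g : Lin f -> Lin g -> Lin (ecomp f g).
Proof.
move=> Hf Hg c x y; rewrite !ecomp_val.
have -> : g (@Defs.ladd k C (@Defs.lscale k C c x) y) = @Defs.ladd k C (@Defs.lscale k C c (g x)) (g y).
  by apply: lieT_eq; rewrite Hg ladd_val lscale_val.
by rewrite Hf.
Qed.

Lemma nabla_add X f g : nabla X (eadd f g) = eadd (nabla X f) (nabla X g).
Proof. by apply: endo_ext => z; rewrite !eadd_val !nabla_val !eadd_val actDr; zmodid. Qed.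
Lemma nabla_scale X c f : nabla X (escale c f) = escale c (nabla X f).
Proof. by apply: endo_ext => z; rewrite !escale_val !nabla_val !escale_val actZr scalerBr. Qed.
Lemma nabla_eid X : nabla X eid = zeroE.
Proof. by apply: endo_ext => z; rewrite nabla_val zeroE_val !eid_val lact_val subrr. Qed.
Lemma nabla_zeroE X : nabla X zeroE = zeroE.
Proof. by apply: endo_ext => z; rewrite nabla_val !zeroE_val act0r subrr. Qed.
Lemma nabla_comp X f g : Lin f ->
  nabla X (ecomp f g) = eadd (ecomp (nabla X f) g) (ecomp f (nabla X g)).
Proof.
move=> Hf; apply: endo_ext => z; rewrite eadd_val nabla_val /Defs.ecomp.
rewrite [sval (nabla X f _)]nabla_val.
have -> : sval (f (nabla X g z)) = sval (f (lact X (g z))) - sval (f (g (lact X z))).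
  exact: (Lin_sub Hf).
zmodid.
Qed.

Lemma nabla_FE X c u v : isLie (sval X) ->
  nabla X (FE c u v) = eadd (eadd (FE c (mulA (sval X) u) v) (FE c (act (sval X) u) v))
                            (FE c u (act (sval X) v)).
Proof.
move=> hX; have DX := isLie_Der hX; have MX := isLie_Mod hX.
apply: endo_ext => z; rewrite !eadd_val nabla_val !FE_val lact_val.
have E := MX (mulA (mulA u (sval z)) v) (treeA (bullet c)).
have -> : act (sval X) (act (mulA (mulA u (sval z)) v) (treeA (bullet c))) =
  act (mulA (sval X) (mulA (mulA u (sval z)) v)) (treeA (bullet c)) +
  act (act (sval X) (mulA (mulA u (sval z)) v)) (treeA (bullet c)) by rewrite E subrK.
rewrite DX DX !mulADl !actDl !mulA_assoc; zmodid.
Qed.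

Lemma nabla_delta X Y : isLie (sval X) -> nabla X (delta Y) = delta (lact X Y).
Proof.
move=> hX; have DX := isLie_Der hX.
apply: endo_ext => z; rewrite nabla_val !delta_val !lact_val /Defs.bracketA actBr !DX; zmodid.
Qed.


Definition Sgen (g : Endo) : Prop := hatT0 g \/ delta_set g.
Definition Sub := subalg_gen Sgen.

Lemma Sub_zeroE : Sub zeroE.
Proof. by rewrite zeroE_escale; apply: sag_scale; apply: sag_id. Qed.

Lemma hatT0_Lin f : hatT0 f -> Lin f.
Proof.
elim=> {f}.
- by move=> f [c [ts [j0 [_ ->]]]]; rewrite free_edgeE; apply: Lin_FE.
- exact: Lin_zeroE.
- by move=> f g _ Hf _ Hg; apply: Lin_eadd.
by move=> c f _ Hf; apply: Lin_escale.
Qed.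

Lemma Sub_Lin f : Sub f -> Lin f.
Proof.
elim=> {f}.
- by move=> f [/hatT0_Lin|[x ->]] //; apply: Lin_delta.
- exact: Lin_eid.
- by move=> f g _ Hf _ Hg; apply: Lin_eadd.
- by move=> c f _ Hf; apply: Lin_escale.
by move=> f g _ Hf _ Hg; apply: Lin_ecomp.
Qed.

Lemma Sub_FE c u v : Sub (FE c u v).
Proof. by apply: sag_base; left; apply: FE_hatT0. Qed.

Lemma Sub_nabla X f : isLie (sval X) -> Sub f -> Sub (nabla X f).
Proof.
move=> hX; elim=> {f}.
- move=> f [Hf|[Y ->]]; last by rewrite nabla_delta //; apply: sag_base; right; exists (lact X Y).
  elim: Hf => {f}.
  + move=> f [c [ts [j0 [_ ->]]]]; rewrite free_edgeE nabla_FE //.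
    by apply: sag_add; [apply: sag_add|]; apply: Sub_FE.
  + by rewrite -/zeroE nabla_zeroE; apply: Sub_zeroE.
  + by move=> f g _ Hf _ Hg; rewrite nabla_add; apply: sag_add.
  + by move=> c f _ Hf; rewrite nabla_scale; apply: sag_scale.
- by rewrite nabla_eid; apply: Sub_zeroE.
- by move=> f g _ Hf _ Hg; rewrite nabla_add; apply: sag_add.
- by move=> c f _ Hf; rewrite nabla_scale; apply: sag_scale.
move=> f g Sf Hf Sg Hg; rewrite nabla_comp; last exact: Sub_Lin.
by apply: sag_add; apply: sag_comp.
Qed.


Lemma act_one Z : isLie Z -> act Z (bw [::]) = 0.
Proof.
move=> hZ; have := isLie_Der hZ (bw [::]) (bw [::]).
rewrite mulA_bw mulA1l mulA1r /= => /eqP; rewrite -subr_eq0 opprD addrA subrr sub0r oppr_eq0.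
by move/eqP.
Qed.

Definition HH (c : C) (u : TA) (w : word) : Endo :=
  fun Z => lproj (act (mulA u (act (sval Z) (bw w))) (treeA (bullet c))).

Lemma HH_val c u w Z : sval (HH c u w Z) = act (mulA u (act (sval Z) (bw w))) (treeA (bullet c)).
Proof. by rewrite /HH lproj_val //; apply: act_bullet_Lie. Qed.

Definition treeT (t : tree C) : LieT := exist _ (treeA t) (@isLie_tree k C t).

Definition DopSub (t : tree C) := forall ht, Sub (dop (exist _ (treeA t) ht)).

Lemma HH_Sub c w : foldr (fun t (acc : Type) => (DopSub t * acc)%type) unit w -> forall u, Sub (HH c u w).
Proof.
elim: w => [|t w IH] /= Hw u.
  have -> : HH c u [::] = zeroE.
    apply: endo_ext => z; rewrite HH_val zeroE_val act_one; last exact: proj2_sig.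
    by rewrite mulA0r act0l.
  exact: Sub_zeroE.
case: Hw => Ht Hw.
have -> : HH c u (t :: w) = eadd (ecomp (FE c u (bw w)) (dop (treeT t))) (HH c (mulA u (treeA t)) w).
  apply: endo_ext => z; rewrite eadd_val /Defs.ecomp !HH_val FE_val dop_val /=.
  have -> : bw (t :: w) = mulA (treeA t) (bw w) by rewrite /Defs.treeA mulA_bw.
  rewrite (isLie_Der (proj2_sig z)) mulADr actDl !mulA_assoc //.
apply: sag_add; last exact: IH.
by apply: sag_comp; [apply: Sub_FE | apply: Ht].
Qed.

Lemma Sub_dop_tree s : DopSub s.
Proof.
apply: (@tree_rect' C DopSub) => c ts IH ht.
have -> : dop (exist _ (treeA (Node c ts)) ht) = eadd (FE c (bw [::]) (bw ts)) (HH c (bw [::]) ts).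
  apply: endo_ext => z; rewrite eadd_val dop_val FE_val HH_val /= tree_act !mulA1l.
  have M := isLie_Mod (proj2_sig z) (bw ts) (treeA (bullet c)).
  by rewrite M subrK.
apply: sag_add; [apply: Sub_FE | exact: (HH_Sub c IH)].
Qed.

Lemma Sub_dop a : isLie a -> forall h, Sub (dop (exist _ a h)).
Proof.
elim=> {a}.
- by move=> t h; apply: Sub_dop_tree.
- move=> h; have -> : dop (exist _ 0 h) = zeroE.
    by apply: endo_ext => z; rewrite dop_val act0r.
  exact: Sub_zeroE.
- move=> a b ha Ha hb Hb h.
  have -> : dop (exist _ (a + b) h) = eadd (dop (exist _ a ha)) (dop (exist _ b hb)).
    by apply: endo_ext => z; rewrite eadd_val !dop_val actDr.
  by apply: sag_add; [apply: Ha | apply: Hb].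
- move=> c a ha Ha h.
  have -> : dop (exist _ (c *: a) h) = escale c (dop (exist _ a ha)).
    by apply: endo_ext => z; rewrite escale_val !dop_val actZr.
  by apply: sag_scale; apply: Ha.
move=> a b ha Ha hb Hb h.
have -> : dop (exist _ (bracketA a b) h) =
   eadd (escale (-1) (ecomp (delta (exist _ b hb)) (dop (exist _ a ha))))
        (ecomp (delta (exist _ a ha)) (dop (exist _ b hb))).
  apply: endo_ext => z; rewrite eadd_val escale_val /Defs.ecomp !delta_val !dop_val /=.
  rewrite /Defs.bracketA actBr !(isLie_Der (proj2_sig z)) scaleN1r; zmodid.
apply: sag_add; last by apply: sag_comp; [apply: sag_base; right; eexists | apply: Hb].
by apply: sag_scale; apply: sag_comp; [apply: sag_base; right; eexists | apply: Ha].
Qed.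

Lemma Sub_nablas Xs nu : Sub nu -> Sub (@Defs.nablas k C Xs nu).
Proof.
move=> Hnu; elim: Xs => [|X Xs IH] //=.
by apply: Sub_nabla => //; apply: proj2_sig.
Qed.

Lemma El_Sub f : El f -> Sub f.
Proof.
elim=> {f}.
- move=> f [Xs [Y [->| ->]]]; apply: Sub_nablas.
    by case: Y => a h; apply: Sub_dop.
  by apply: sag_base; right; exists Y.
- exact: sag_id.
- by move=> f g _ Hf _ Hg; apply: sag_add.
- by move=> c f _ Hf; apply: sag_scale.
by move=> f g _ Hf _ Hg; apply: sag_comp.
Qed.


Definition ElS := espan (@El_generator k C).

Lemma El_zeroE : El zeroE.
Proof. by rewrite zeroE_escale; apply: sag_scale; apply: sag_id. Qed.

Lemma ElS_El f : ElS f -> El f.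
Proof.
elim=> {f}.
- by move=> f Hf; apply: sag_base.
- exact: El_zeroE.
- by move=> f g _ Hf _ Hg; apply: sag_add.
by move=> c f _ Hf; apply: sag_scale.
Qed.

Lemma ElS_zeroE : ElS zeroE.
Proof. exact: esp_zero. Qed.

Lemma ElS_nabla X f : ElS f -> ElS (nabla X f).
Proof.
elim=> {f}.
- move=> f [Xs [Y [->| ->]]]; apply: esp_base; exists (X :: Xs), Y; [left|right]; by [].
- by have := nabla_zeroE X; rewrite /zeroE => ->; apply: esp_zero.
- by move=> f g _ Hf _ Hg; rewrite nabla_add; apply: esp_add.
by move=> c f _ Hf; rewrite nabla_scale; apply: esp_scale.
Qed.

Definition Gen (c : C) (a : TA) : Endo :=
  fun Z => lproj (act (mulA a (sval Z)) (treeA (bullet c))).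

Lemma Gen_val c a Z : sval (Gen c a Z) = act (mulA a (sval Z)) (treeA (bullet c)).
Proof. by rewrite /Gen lproj_val //; apply: act_bullet_Lie. Qed.

Lemma ElS_Gen_lin c f a : (forall u, ElS (Gen c (f u))) -> ElS (Gen c (lin f a)).
Proof.
move=> Hf; apply: (@lin_closed (fun a => ElS (Gen c a))) => //.
- have -> : Gen c 0 = zeroE by apply: endo_ext => z; rewrite Gen_val mulA0l act0l.
  exact: ElS_zeroE.
- move=> x y Hx Hy.
  have -> : Gen c (x + y) = eadd (Gen c x) (Gen c y).
    by apply: endo_ext => z; rewrite eadd_val !Gen_val mulADl actDl.
  exact: esp_add.
move=> x y Hy.
have -> : Gen c (x *: y) = escale x (Gen c y).
  by apply: endo_ext => z; rewrite escale_val !Gen_val mulAZl actZl.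
exact: esp_scale.
Qed.

Lemma Gen_bw c n : forall w, size w = n -> ElS (Gen c (bw w)).
Proof.
elim: n => [|n IH] [|t w] //= Hs.
  have -> : Gen c (bw [::]) = dop (treeT (bullet c)).
    by apply: endo_ext => z; rewrite Gen_val dop_val mulA1l.
  by apply: esp_base; exists [::], (treeT (bullet c)); left.
case: Hs => Hs.
have -> : Gen c (bw (t :: w)) =
    eadd (nabla (treeT t) (Gen c (bw w))) (escale (-1) (Gen c (Dw t w))).
  apply: endo_ext => z; rewrite eadd_val escale_val nabla_val !Gen_val lact_val /=.
  have -> : bw (t :: w) = mulA (treeA t) (bw w) by rewrite /Defs.treeA mulA_bw.
  rewrite mulA_assoc Mod_tree !act_tree D_der D_bw actDl scaleN1r; zmodid.
apply: esp_add; first by apply: ElS_nabla; apply: IH.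
apply: esp_scale.
rewrite -(lin_id (Dw t w)) (@Dw_size t w bw (fun u => if size u == n then bw u else 0)); last first.
  by move=> u Hu; rewrite Hu Hs eqxx.
apply: ElS_Gen_lin => u; case: eqP => [Hu|_]; first exact: IH.
have -> : Gen c 0 = zeroE by apply: endo_ext => z; rewrite Gen_val mulA0l act0l.
exact: ElS_zeroE.
Qed.

Lemma FE_El c w2 : forall w1, El (FE c (bw w1) (bw w2)).
Proof.
elim: w2 => [|t w2 IH] w1.
  have -> : FE c (bw w1) (bw [::]) = Gen c (bw w1).
    by apply: endo_ext => z; rewrite FE_val Gen_val mulA1r.
  by apply: ElS_El; apply: (@Gen_bw c (size w1) w1).
  
have -> : FE c (bw w1) (bw (t :: w2)) =
   eadd (FE c (bw (rcons w1 t)) (bw w2))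
        (ecomp (FE c (bw w1) (bw w2)) (escale (-1) (delta (treeT t)))).
  apply: endo_ext => z; rewrite eadd_val /Defs.ecomp !FE_val escale_val delta_val /=.
  have -> : bw (t :: w2) = mulA (treeA t) (bw w2) by rewrite /Defs.treeA mulA_bw.
  have -> : bw (rcons w1 t) = mulA (bw w1) (treeA t) by rewrite /Defs.treeA mulA_bw cats1.
  rewrite -actDl; congr (act _ _).
  rewrite /Defs.bracketA scaleN1r mulANr mulANl mulABr mulABl !mulA_assoc; zmodid.
apply: sag_add; first exact: IH.
apply: sag_comp; first exact: IH.
apply: sag_scale; apply: sag_base; exists [::], (treeT t); right; by [].
Qed.

Lemma hatT0_El (f : Endo) : hatT0 f -> El f.
Proof.
elim=> {f}.
- by move=> f [c [ts [j0 [_ ->]]]]; rewrite free_edgeE; apply: FE_El.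
- exact: El_zeroE.
- by move=> f g _ Hf _ Hg; apply: sag_add.
by move=> c f _ Hf; apply: sag_scale.
Qed.

Lemma Sub_El f : Sub f -> El f.
Proof.
elim=> {f}.
- move=> f [/hatT0_El //|[x ->]].
  by apply: sag_base; exists [::], x; right.
- exact: sag_id.
- by move=> f g _ Hf _ Hg; apply: sag_add.
- by move=> c f _ Hf; apply: sag_scale.
by move=> f g _ Hf _ Hg; apply: sag_comp.
Qed.

End S.

Unset Implicit Arguments.

Theorem lemma5p4 (k : fieldType) (C : finType) :
  [pchar k] =i pred0 ->
  forall f : Endo k C,
    El f <-> subalg_gen (fun g => hatT0 g \/ delta_set g) f.
Proof.
move=> _ f; split; [exact: El_Sub | exact: Sub_El].
Qed.
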